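(* Let $I,J\subset S$ be Borel ideals such that $I_s\subseteq J_s$ for all $s\gg0$ and $p_{S/I}(z)=p_{S/J}(z)+a$ for some $a\in\mathbb N$. Then $I$ and $J$ have the same $x_1$-saturation, i.e. $I_{x_0x_1}=J_{x_0x_1}$.
   Context: $S=K[x_0,\dots,x_n]$, $K$ algebraically closed of characteristic $0$, standard grading, $x_0<x_1<\dots<x_n$. A monomial ideal is Borel if $x^\alpha\in J$, $\alpha_j>0$, $j<n$ imply $x^\alpha x_{j+1}/x_j\in J$. For a Borel ideal $J$, its $x_1$-saturation $J_{x_0x_1}$ is the ideal generated by the terms obtained by setting $x_0=x_1=1$ in the minimal monomial generators of $J$. $p_{S/I}(z)$ denotes the Hilbert polynomial of $S/I$. *)

(* Defs.v *)
(* Monomial ideals of S = K[x_0..x_n] encoded combinatorially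
   by their sets of monomials (exponent vectors). *)
From HB Require Import structures.
From mathcomp Require Import all_boot all_order all_algebra.
Set Implicit Arguments. Unset Strict Implicit. Unset Printing Implicit Defensive.
Import GRing.Theory.

Definition mon (n : nat) := 'I_n.+1 -> nat.

Definition mdeg n (m : mon n) : nat := \sum_(i < n.+1) m i.

Definition mdivides n (m m' : mon n) : Prop := forall i, m i <= m' i.

Definition is_monomial_ideal n (I : pred (mon n)) : Prop :=
  forall m m', I m -> mdivides m m' -> I m'.

Definition elem_move n (m : mon n) (j : 'I_n.+1) : mon n :=
  fun i => if i == j then (m i).-1
           else if val i == (val j).+1 then (m i).+1 else m i.

Definition is_Borel n (I : pred (mon n)) : Prop :=
  is_monomial_ideal I /\
  forall (m : mon n) (j : 'I_n.+1), I m -> 0 < m j -> val j < n -> I (elem_move m j).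

Definition min_gen n (I : pred (mon n)) (g : mon n) : Prop :=
  I g /\ forall m, I m -> mdivides m g -> forall i, m i = g i.

(* the x_1-saturation J_{x0x1}: ideal generated by the minimal generators
   with x_0 = x_1 = 1; a monomial lies in it iff it is divisible by some such term *)
Definition x1_saturation n (I : pred (mon n)) : mon n -> Prop :=
  fun m => exists g, min_gen I g /\ forall i : 'I_n.+1, 2 <= val i -> g i <= m i.

(* Hilbert function of S/I : number of degree-s monomials not in I *)
Definition hilbf n (I : pred (mon n)) (s : nat) : nat :=
  #|[pred f : {ffun 'I_n.+1 -> 'I_s.+1} |
      ((\sum_(i < n.+1) val (f i)) == s) && ~~ I (fun i => val (f i))]|.

Definition is_hilb_poly n (I : pred (mon n)) (p : {poly rat}) : Prop :=
  exists s0, forall s, s0 <= s -> ((hilbf I s)%:R : rat) = (p.[s%:R])%R.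

(* Main.v *)
Require Import Defs.
From mathcomp Require Import all_boot all_order all_algebra.
From Stdlib Require Import Classical Lia.
Import GRing.Theory.
Set Implicit Arguments. Unset Strict Implicit.

Section Aux.
Variable n : nat.
Hypothesis hn : 1 <= n.

Definition i0 : 'I_n.+1 := ord0.
Definition i1 : 'I_n.+1 := Ordinal (hn : 1 < n.+1).

Definition upd (m : mon n) k0 k1 : mon n :=
  fun i => if i == i0 then k0 else if i == i1 then k1 else m i.

Lemma i1_neq_i0 : (i1 != i0).
Proof. by []. Qed.

Lemma mono_div (I : pred (mon n)) u v : is_monomial_ideal I -> I u -> mdivides u v -> I v.
Proof. by move=> H Iu d; apply: H Iu d. Qed.

Lemma push1 (I : pred (mon n)) m k0 k1 : is_Borel I -> I (upd m k0.+1 k1) -> I (upd m k0 k1.+1).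
Proof.
case=> Hm HB Iu.
have H := HB _ i0 Iu isT hn.
apply: (mono_div Hm H) => i; rewrite /elem_move /upd.
case Hi: (i == i0) => //=.
have -> : (val i == 1) = (i == i1) by [].
by case: (i == i1).
Qed.

Lemma pushN (I : pred (mon n)) m j : is_Borel I -> forall k0 k1,
  I (upd m (k0 + j) k1) -> I (upd m k0 (k1 + j)).
Proof.
move=> BI; elim: j => [|j IH] k0 k1; first by rewrite !addn0.
rewrite addnS -addSnnS => H; apply: IH; exact: push1.
Qed.

Lemma mdeg_ge (u : mon n) i : u i <= mdeg u.
Proof. by rewrite /mdeg (bigD1 i) //= leq_addr. Qed.

Lemma mdeg_lt (u v : mon n) i : mdivides u v -> u i < v i -> mdeg u < mdeg v.
Proof.
move=> d lt; rewrite /mdeg (bigD1 i) //= [X in _ < X](bigD1 i) //=.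
by rewrite -addSn (leq_add lt (leq_sum _ (fun j _ => d j))).
Qed.

Definition R (m : mon n) := \sum_(i < n.+1 | (i != i0) && (i != i1)) m i.

Lemma mdeg_upd m k0 k1 : mdeg (upd m k0 k1) = k0 + k1 + R m.
Proof.
rewrite /mdeg (bigD1 i0) //= (bigD1 i1) //= addnA /upd eqxx.
rewrite (negbTE i1_neq_i0) eqxx; congr (_ + _).
by apply: eq_bigr => i /andP[/negbTE -> /negbTE ->].
Qed.

Lemma ex_min_gen (I : pred (mon n)) h : I h -> exists g, min_gen I g /\ mdivides g h.
Proof.
have: forall N (h : mon n), mdeg h < N -> I h -> exists g, min_gen I g /\ mdivides g h.
  elim=> [//|N IH] h' lt Ih; rewrite ltnS in lt.
  case: (classic (exists m, [/\ I m, mdivides m h' & exists i, m i <> h' i])).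
  - case=> m [Im d [i ne]].
    have lt' : mdeg m < N.
      apply: leq_trans (mdeg_lt (i:=i) d _) lt. by rewrite ltn_neqAle (d i) andbT; apply/eqP.
    case: (IH m lt' Im) => g [mg dg]; exists g; split=> // j; exact: leq_trans (dg j) (d j).
  - move=> nex; exists h'; split=> //; split=> // m Im d i.
    apply/eqP; apply/negPn/negP => /eqP ne; apply: nex; exists m; split=> //; by exists i.
by move=> H Ih; apply: (H (mdeg h).+1).
Qed.

Lemma sat_to (I : pred (mon n)) m : is_Borel I -> x1_saturation I m -> exists c, I (upd m 0 c).
Proof.
move=> BI [g [[Ig _] dg]]; exists (g i1 + g i0).
apply: (pushN BI); rewrite add0n.
apply: (mono_div BI.1 Ig) => i; rewrite /upd.
case: (i =P i0) => [->|/eqP ne0] //; case: (i =P i1) => [->|/eqP ne1] //.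
apply: dg; move: ne0 ne1; rewrite /i0 /i1 -!(inj_eq val_inj) /=.
by case: (val i) => [|[|k]].
Qed.

Lemma sat_of (I : pred (mon n)) m k0 k1 : I (upd m k0 k1) -> x1_saturation I m.
Proof.
move=> /ex_min_gen [g [mg dg]]; exists g; split=> // i hi.
have := dg i; rewrite /upd.
case: (i =P i0) => [e|_]; first by rewrite e in hi.
by case: (i =P i1) => [e|_] //; rewrite e in hi.
Qed.

Lemma count_contra (I J : pred (mon n)) s0 a (pI pJ : {poly rat}) m c :
  is_Borel I -> is_Borel J -> (forall u : mon n, s0 <= mdeg u -> I u -> J u) ->
  is_hilb_poly I pI -> is_hilb_poly J pJ -> pI = (pJ + (a%:R)%:P)%R ->
  J (upd m 0 c) -> (forall c', ~ I (upd m 0 c')) -> False.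
Proof.
move=> BI BJ Hs0 [sI HsI] [sJ HsJ] Hp Jc nI.
pose t := a + s0 + sI + sJ.
pose s := t + c + R m.
have le1 : sI <= s by apply/leP; rewrite /s /t -!plusE; lia.
have le2 : sJ <= s by apply/leP; rewrite /s /t -!plusE; lia.
have le3 : s0 <= s by apply/leP; rewrite /s /t -!plusE; lia.
have eqH : hilbf I s = hilbf J s + a.
  apply/eqP; rewrite -(Num.Theory.eqr_nat rat) natrD HsI // HsJ // Hp hornerD hornerC.
  by [].
have mk_deg (k : nat) : k <= a -> mdeg (upd m (t - k) (c + k)) = s.
  move=> ka; rewrite mdeg_upd /s; congr (_ + _).
  have kt : k <= t by apply/leP; move/leP: ka; rewrite /t -!plusE; lia.
  by rewrite addnC -addnA (addnC k) subnK // addnC.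
have mk_J (k : nat) : J (upd m (t - k) (c + k)).
  apply: (mono_div BJ.1 Jc) => i; rewrite /upd.
  by case: (i == i0) => //; case: (i == i1) => //; rewrite leq_addr.
have mk_nI (k : nat) : k <= a -> ~ I (upd m (t - k) (c + k)).
  move=> ka Ik; apply: (nI (c + k + (t - k))).
  by apply: (pushN BI); rewrite add0n.
pose phi (k : 'I_a.+1) : {ffun 'I_n.+1 -> 'I_s.+1} :=
  [ffun i => inord (upd m (t - k) (c + k) i)].
have vphi k i : val (phi k i) = upd m (t - k) (c + k) i.
  rewrite ffunE /= inordK // ltnS -(mk_deg k (ltn_ord k : (k : nat) <= a)).
  exact: mdeg_ge.
have inj_phi : injective phi.
  move=> k k' /(congr1 (fun f : {ffun 'I_n.+1 -> 'I_s.+1} => val (f i1))).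
  rewrite !vphi /upd (negbTE i1_neq_i0) eqxx => /addnI e.
  exact: val_inj.
pose A := [pred f : {ffun 'I_n.+1 -> 'I_s.+1} |
      ((\sum_(i < n.+1) val (f i)) == s) && ~~ I (fun i => val (f i))].
pose B := [pred f : {ffun 'I_n.+1 -> 'I_s.+1} |
      ((\sum_(i < n.+1) val (f i)) == s) && ~~ J (fun i => val (f i))].
have hA : hilbf I s = #|A| by [].
have hB : hilbf J s = #|B| by [].
have sub : [predU B & mem (codom phi)] \subset A.
  apply/subsetP => f; rewrite !inE => /orP[/andP[/eqP ds nJ]|/codomP[k ->]].
    rewrite ds eqxx /=; apply/negP => If; move/negP: nJ; apply.
    by apply: Hs0 If; rewrite /mdeg ds.
  have ek : (fun i => val (phi k i)) =1 upd m (t - k) (c + k) by move=> i; rewrite vphi.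
  rewrite (eq_bigr _ (fun i _ => ek i)) -/(mdeg _) mk_deg ?eqxx /=; last by rewrite -ltnS.
  apply/negP => If; apply: (mk_nI k); first by rewrite -ltnS.
  by apply: (mono_div BI.1 If) => i; rewrite ek.
have disj : #|[predI B & mem (codom phi)]| = 0.
  apply: eq_card0 => f; rewrite !inE; apply/negP => /andP[/andP[_ nJ] /codomP[k ek]].
  move/negP: nJ; apply; rewrite ek.
  by apply: (mono_div BJ.1 (mk_J k)) => i; rewrite vphi.
have := cardUI B (mem (codom phi)); rewrite disj addn0 card_codom // card_ord => e.
have := subset_leq_card sub; rewrite e -hA -hB eqH.
by rewrite leq_add2l ltnn.
Qed.

End Aux.

Theorem mainTheorem12 (n : nat) (hn : 1 <= n) (I J : pred (mon n)) :
  is_Borel I -> is_Borel J ->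
  (exists s0, forall m : mon n, s0 <= mdeg m -> I m -> J m) ->
  forall (a : nat) (pI pJ : {poly rat}),
    is_hilb_poly I pI -> is_hilb_poly J pJ ->
    pI = (pJ + (a%:R)%:P)%R ->
  forall m : mon n, x1_saturation I m <-> x1_saturation J m.
Proof.
move=> BI BJ [s0 Hs0] a pI pJ HI HJ Hp m; split.
- move=> /(sat_to hn BI) [c Ic].
  apply: (sat_of (k0 := s0) (k1 := c)); apply: Hs0.
    by rewrite mdeg_upd -addnA leq_addr.
  apply: (mono_div BI.1 Ic) => i; rewrite /upd.
  by case: (i == i0 n).
- move=> /(sat_to hn BJ) [c Jc].
  case: (classic (exists c', I (upd hn m 0 c'))) => [[c' Ic']|nI].
    exact: sat_of Ic'.
  exfalso; apply: (count_contra BI BJ Hs0 HI HJ Hp Jc) => c' Ic'.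
  by apply: nI; exists c'.
Qed.
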